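(* Fix an integer $N\ge2$. For $H\in[0,1)$ define $$F^1_H(N)=\sum_{k=2}^N\left((k+1)^{2H}+(k-1)^{2H}-2k^{2H}\right)^2+\left(2^{2H}-2\right)^2,$$ $$F^2_H(N)=\sum_{k=2}^N(N-k+1)\left|(k+1)^{2H}+(k-1)^{2H}-2k^{2H}\right|+N\left|2^{2H}-2\right|,$$ and $E^i_H(N)=-\frac{(H-1/2)^2}{1-H}F^i_H(N)$, $i=1,2$. Then both $E^1_H(N)$ and $E^2_H(N)$ increase in $H$ on $[0,\frac12]$, vanish at $H=\frac12$, and decrease in $H$ on $[\frac12,1)$. More precisely, $E^1_H(N)$ increases from $-\frac14$ (at $H=0$) to $0$ and then decreases from $0$ to $-\infty$ (as $H\uparrow1$), and $E^2_H(N)$ increases from $-\frac N4$ (at $H=0$) to $0$ and then decreases from $0$ to $-\infty$ (as $H\uparrow1$).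
   Context: These are ''alternative entropy functionals'' of fractional Gaussian noise: $(k+1)^{2H}+(k-1)^{2H}-2k^{2H}=2\rho_k(H)$, where $\rho_k(H)$ is the lag-$k$ autocovariance of fractional Gaussian noise with Hurst index $H$; $F^1$ is the sum $\sum_{k=1}^N(2\rho_k(H))^2$ and $F^2$ is $\sum_{k=1}^N(N-k+1)|2\rho_k(H)|$. In the formulas, $(k-1)^{2H}$ for $k\ge2$ and $H=0$ equals $1$. *)

(* Defs.v *)
From Stdlib Require Import Reals Lra.
From Coquelicot Require Import Coquelicot.
Open Scope R_scope.

(* 2 rho_k(H) = (k+1)^{2H} + (k-1)^{2H} - 2 k^{2H}; only used for k >= 2,
   where all bases are >= 1 > 0, so Rpower is the genuine real power. *)
Definition rho2 (H : R) (k : nat) : R :=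
  Rpower (INR k + 1) (2 * H) + Rpower (INR k - 1) (2 * H) - 2 * Rpower (INR k) (2 * H).

Definition FF1 (N : nat) (H : R) : R :=
  sum_n_m (fun k => (rho2 H k) ^ 2) 2 N + (Rpower 2 (2 * H) - 2) ^ 2.

Definition FF2 (N : nat) (H : R) : R :=
  sum_n_m (fun k => (INR N - INR k + 1) * Rabs (rho2 H k)) 2 N
  + INR N * Rabs (Rpower 2 (2 * H) - 2).

Definition Efun (F : R) (H : R) : R := - ((H - 1/2) ^ 2 / (1 - H)) * F.

Definition Ent1 (N : nat) (H : R) : R := Efun (FF1 N H) H.
Definition Ent2 (N : nat) (H : R) : R := Efun (FF2 N H) H.

(* Main.v *)
Require Import Defs.
From Stdlib Require Import Reals Lra Lia.
From Coquelicot Require Import Coquelicot.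
Open Scope R_scope.

Lemma mono_le (f df : R -> R) a b : a <= b ->
  (forall c, a <= c <= b -> is_derive f c (df c)) ->
  (forall c, a <= c <= b -> 0 <= df c) -> f a <= f b.
Proof.
  intros Hab Hd Hp. destruct (Rle_lt_or_eq_dec _ _ Hab) as [H|H].
  - destruct (MVT_cor2 f df a b H) as [c [Hc1 Hc2]].
    + intros c Hc. apply is_derive_Reals. now apply Hd.
    + assert (0 <= df c) by (apply Hp; lra). nra.
  - subst; lra.
Qed.

Lemma chord (f df : R -> R) a c b : a <= c <= b ->
  (forall t, a <= t <= b -> is_derive f t (df t)) ->
  (forall s t, a <= s -> s <= t -> t <= b -> df s <= df t) ->
  f c * (b - a) <= f a * (b - c) + f b * (c - a).
Proof.
  intros [H1 H2] Hd Hm.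
  destruct (Rle_lt_or_eq_dec _ _ H1) as [L1|E1]; [|subst; lra].
  destruct (Rle_lt_or_eq_dec _ _ H2) as [L2|E2]; [|subst; lra].
  destruct (MVT_cor2 f df a c L1) as [u [Hu1 Hu2]].
  { intros t Ht. apply is_derive_Reals. apply Hd. lra. }
  destruct (MVT_cor2 f df c b L2) as [v [Hv1 Hv2]].
  { intros t Ht. apply is_derive_Reals. apply Hd. lra. }
  assert (df u <= df v) by (apply Hm; lra).
  assert (0 <= (df v - df u) * ((c - a) * (b - c))).
  { apply Rmult_le_pos; nra. }
  nra.
Qed.

Lemma second_diff (f f1 : R -> R) a :
  (forall t, a <= t <= a + 2 -> is_derive f t (f1 t)) ->
  (forall s t, a <= s -> s <= t -> t <= a + 2 -> f1 s <= f1 t) ->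
  2 * f (a + 1) <= f a + f (a + 2).
Proof.
  intros Hd Hm.
  pose proof (chord f f1 a (a+1) (a+2) ltac:(lra) Hd Hm).
  replace (a + 2 - a) with 2 in H by ring.
  replace (a + 2 - (a + 1)) with 1 in H by ring.
  replace (a + 1 - a) with 1 in H by ring. lra.
Qed.

Lemma shift_derive (f : R -> R) c t l :
  is_derive f (t + c) l -> is_derive (fun x => f (x + c)) t l.
Proof.
  intros H.
  assert (Hc : is_derive (fun x => x + c) t 1) by (auto_derive; auto).
  pose proof (is_derive_comp f (fun x => x + c) t l 1 H Hc) as K.
  replace l with (scal 1 l) by (unfold scal; simpl; unfold mult; simpl; ring). exact K.
Qed.

Lemma third_diff (f f1 f2 : R -> R) a :
  (forall t, a <= t <= a + 3 -> is_derive f t (f1 t)) ->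
  (forall t, a <= t <= a + 3 -> is_derive f1 t (f2 t)) ->
  (forall s t, a <= s -> s <= t -> t <= a + 3 -> f2 s <= f2 t) ->
  0 <= f (a + 3) - 3 * f (a + 2) + 3 * f (a + 1) - f a.
Proof.
  intros Hd1 Hd2 Hm.
  pose (g := fun t => f (t + 2) - 2 * f (t + 1) + f t).
  pose (g1 := fun t => f1 (t + 2) - 2 * f1 (t + 1) + f1 t).
  assert (g a <= g (a + 1)).
  { apply (mono_le g g1); [lra| |].
    - intros c Hc. unfold g, g1.
      apply (is_derive_plus (fun t => f (t+2) - 2 * f (t+1)) f).
      + apply (is_derive_minus (fun t => f (t+2)) (fun t => 2 * f (t+1))).
        * apply shift_derive. apply Hd1. lra.
        * apply is_derive_scal. apply shift_derive. apply Hd1. lra.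
      + apply Hd1; lra.
    - intros c Hc. unfold g1.
      pose proof (second_diff f1 f2 c) as K.
      replace (c + 2) with (c + 2) in K by ring.
      assert (2 * f1 (c + 1) <= f1 c + f1 (c + 2)).
      { apply K. intros t Ht; apply Hd2; lra. intros s t H1 H2 H3; apply Hm; lra. }
      lra. }
  unfold g in H.
  replace (a + 1 + 2) with (a + 3) in H by ring.
  replace (a + 1 + 1) with (a + 2) in H by ring. lra.
Qed.

Lemma Rpower_base1 x : Rpower 1 x = 1.
Proof. unfold Rpower. rewrite ln_1, Rmult_0_r. apply exp_0. Qed.

Lemma Rpower_exp0 b : Rpower b 0 = 1.
Proof. unfold Rpower. rewrite Rmult_0_l. apply exp_0. Qed.

Lemma Rpower_pos b e : 0 < Rpower b e.
Proof. unfold Rpower. apply exp_pos. Qed.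

Lemma Rpower_anti s t e : 0 < s -> s <= t -> e <= 0 -> Rpower t e <= Rpower s e.
Proof.
  intros Hs Hst He.
  replace e with (- (- e)) by ring. rewrite (Rpower_Ropp t (- e)), (Rpower_Ropp s (- e)).
  apply Rinv_le_contravar. apply Rpower_pos.
  apply Rle_Rpower_l; lra.
Qed.

Lemma Rpower_mono s t e : 0 < s -> s <= t -> 0 <= e -> Rpower s e <= Rpower t e.
Proof. intros. apply Rle_Rpower_l; lra. Qed.

Lemma der_pow e t : 0 < t -> is_derive (fun t => Rpower t e) t (e * Rpower t (e - 1)).
Proof. intros. apply is_derive_Reals. now apply derivable_pt_lim_power. Qed.

Lemma der_pow1 e t : 0 < t ->
  is_derive (fun t => e * Rpower t (e - 1)) t (e * ((e - 1) * Rpower t (e - 1 - 1))).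
Proof. intros. apply is_derive_scal. now apply der_pow. Qed.

Lemma der_opp (f : R -> R) t l : is_derive f t l -> is_derive (fun t => - f t) t (- l).
Proof. intros H. apply (is_derive_opp f t l H). Qed.

Lemma pow_second_concave x a : 0 <= x <= 1 -> 0 < a ->
  Rpower a x + Rpower (a + 2) x <= 2 * Rpower (a + 1) x.
Proof.
  intros Hx Ha.
  pose proof (second_diff (fun t => - Rpower t x) (fun t => - (x * Rpower t (x - 1))) a) as K.
  cut (2 * - Rpower (a + 1) x <= - Rpower a x + - Rpower (a + 2) x). lra.
  apply K.
  - intros t Ht. apply der_opp. apply der_pow. lra.
  - intros s t H1 H2 H3. apply Ropp_le_contravar. apply Rmult_le_compat_l. lra.
    apply Rpower_anti; lra.
Qed.

Lemma pow_second_convex x a : 1 <= x -> 0 < a ->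
  2 * Rpower (a + 1) x <= Rpower a x + Rpower (a + 2) x.
Proof.
  intros Hx Ha.
  apply (second_diff (fun t => Rpower t x) (fun t => x * Rpower t (x - 1)) a).
  - intros t Ht. apply der_pow. lra.
  - intros s t H1 H2 H3. apply Rmult_le_compat_l. lra.
    apply Rpower_mono; lra.
Qed.

Lemma pow_third_concave x a : 0 <= x <= 1 -> 0 < a ->
  0 <= Rpower (a + 3) x - 3 * Rpower (a + 2) x + 3 * Rpower (a + 1) x - Rpower a x.
Proof.
  intros Hx Ha.
  apply (third_diff (fun t => Rpower t x) (fun t => x * Rpower t (x - 1))
     (fun t => x * ((x - 1) * Rpower t (x - 1 - 1))) a).
  - intros t Ht. apply der_pow. lra.
  - intros t Ht. apply der_pow1. lra.
  - intros s t H1 H2 H3.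
    assert (Rpower t (x - 1 - 1) <= Rpower s (x - 1 - 1)) by (apply Rpower_anti; lra).
    assert (x * (x - 1) <= 0) by nra. nra.
Qed.

Lemma pow_third_convex x a : 1 <= x <= 2 -> 0 < a ->
  Rpower (a + 3) x - 3 * Rpower (a + 2) x + 3 * Rpower (a + 1) x - Rpower a x <= 0.
Proof.
  intros Hx Ha.
  pose proof (third_diff (fun t => - Rpower t x) (fun t => - (x * Rpower t (x - 1)))
     (fun t => - (x * ((x - 1) * Rpower t (x - 1 - 1)))) a) as K.
  cut (0 <= - Rpower (a + 3) x - 3 * - Rpower (a + 2) x + 3 * - Rpower (a + 1) x - - Rpower a x). lra.
  apply K.
  - intros t Ht. apply der_opp. apply der_pow. lra.
  - intros t Ht. apply der_opp. apply der_pow1. lra.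
  - intros s t H1 H2 H3.
    assert (Rpower t (x - 1 - 1) <= Rpower s (x - 1 - 1)) by (apply Rpower_anti; lra).
    assert (0 <= x * (x - 1)) by nra. nra.
Qed.

Definition mm (x : R) := Rpower (3/2) x + 3 * Rpower (1/2) x - 3.
Definition mm1 (x : R) := Rpower (3/2) x * ln (3/2) + 3 * (Rpower (1/2) x * ln (1/2)).

Lemma mm_der x : is_derive mm x (mm1 x).
Proof. unfold mm, mm1, Rpower. auto_derive. auto. ring. Qed.

Lemma ln32 : 0 < ln (3/2).
Proof. rewrite <- ln_1. apply ln_increasing; lra. Qed.
Lemma ln12 : ln (1/2) < 0.
Proof. rewrite <- ln_1. apply ln_increasing; lra. Qed.

Lemma exp_le_exp a b : a <= b -> exp a <= exp b.
Proof. intros H. destruct (Rle_lt_or_eq_dec _ _ H) as [L|E]. left; now apply exp_increasing. subst; lra. Qed.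

Lemma mm1_mono s t : s <= t -> mm1 s <= mm1 t.
Proof.
  intros H. unfold mm1, Rpower.
  pose proof ln32; pose proof ln12.
  assert (exp (s * ln (3/2)) <= exp (t * ln (3/2))).
  { apply exp_le_exp. nra. }
  assert (exp (t * ln (1/2)) <= exp (s * ln (1/2))).
  { apply exp_le_exp. nra. }
  nra.
Qed.

Lemma mm_1 : mm 1 = 0.
Proof. unfold mm. rewrite !Rpower_1 by lra. lra. Qed.
Lemma mm_2 : mm 2 = 0.
Proof.
  unfold mm. replace 2 with (1 + 1) by ring. rewrite !Rpower_plus, !Rpower_1 by lra. lra.
Qed.

Lemma mm_rel x : Rpower 2 x * mm x = Rpower 3 x + 3 - 3 * Rpower 2 x.
Proof.
  unfold mm.
  assert (E1 : Rpower 2 x * Rpower (3/2) x = Rpower 3 x).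
  { rewrite Rpower_mult_distr by lra. f_equal. field. }
  assert (E2 : Rpower 2 x * Rpower (1/2) x = 1).
  { rewrite Rpower_mult_distr by lra. replace (2 * (1/2)) with 1 by field. apply Rpower_base1. }
  replace (Rpower 2 x * (Rpower (3 / 2) x + 3 * Rpower (1 / 2) x - 3))
    with (Rpower 2 x * Rpower (3/2) x + 3 * (Rpower 2 x * Rpower (1/2) x) - 3 * Rpower 2 x) by ring.
  rewrite E1, E2. ring.
Qed.

Lemma K1_concave x : 0 <= x <= 1 -> 0 <= Rpower 3 x - 3 * Rpower 2 x + 3.
Proof.
  intros Hx.
  pose proof (chord mm mm1 x 1 2 ltac:(lra) (fun t _ => mm_der t)
    (fun s t _ H _ => mm1_mono s t H)) as K.
  rewrite mm_1, mm_2 in K.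
  assert (0 <= mm x) by lra.
  pose proof (mm_rel x). pose proof (Rpower_pos 2 x). nra.
Qed.

Lemma K1_convex x : 1 <= x <= 2 -> Rpower 3 x - 3 * Rpower 2 x + 3 <= 0.
Proof.
  intros Hx.
  pose proof (chord mm mm1 1 x 2 ltac:(lra) (fun t _ => mm_der t)
    (fun s t _ H _ => mm1_mono s t H)) as K.
  rewrite mm_1, mm_2 in K.
  assert (mm x <= 0) by lra.
  pose proof (mm_rel x). pose proof (Rpower_pos 2 x). nra.
Qed.

Lemma Dmono K x y : 1 <= K -> 0 <= x -> x <= y ->
  Rpower (K + 1) x - Rpower K x <= Rpower (K + 1) y - Rpower K y.
Proof.
  intros HK Hx Hxy.
  assert (E : forall z, Rpower (K + 1) z - Rpower K z = Rpower K z * (Rpower ((K+1)/K) z - 1)).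
  { intros z. rewrite Rmult_minus_distr_l, Rpower_mult_distr by (try apply Rdiv_lt_0_compat; lra).
    replace (K * ((K + 1) / K)) with (K + 1) by (field; lra). ring. }
  rewrite !E.
  assert (Hq : 1 <= (K + 1) / K).
  { apply (Rmult_le_reg_r K); [lra|]. unfold Rdiv. rewrite Rmult_assoc, Rinv_l by lra. lra. }
  assert (Rpower K x <= Rpower K y) by (apply Rle_Rpower; lra).
  assert (Rpower ((K+1)/K) x <= Rpower ((K+1)/K) y) by (apply Rle_Rpower; lra).
  assert (1 <= Rpower ((K+1)/K) x).
  { pose proof (Rle_Rpower ((K+1)/K) 0 x Hq Hx) as W. rewrite Rpower_exp0 in W. exact W. }
  pose proof (Rpower_pos K x).
  apply Rmult_le_compat; lra.
Qed.

Definition Dd (x : R) (j : nat) : R :=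
  match j with O => 1 | S _ => Rpower (INR j + 1) x - Rpower (INR j) x end.
Definition rr (x : R) (k : nat) : R := Dd x k - Dd x (pred k).

Lemma rr_1 x : rr x 1 = Rpower 2 x - 2.
Proof. unfold rr, Dd; cbv beta iota; simpl pred. simpl INR. rewrite Rpower_base1.
  replace (1 + 1) with 2 by ring. ring. Qed.

Lemma rr_SS x j : rr x (S (S j)) =
  Rpower (INR (S j) + 2) x - 2 * Rpower (INR (S j) + 1) x + Rpower (INR (S j)) x.
Proof.
  unfold rr; simpl pred. unfold Dd; cbv beta iota.
  rewrite (S_INR (S j)). replace (INR (S j) + 1 + 1) with (INR (S j) + 2) by ring. ring.
Qed.

Lemma INR_S_pos j : 1 <= INR (S j).
Proof. rewrite S_INR. pose proof (pos_INR j). lra. Qed.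

Lemma rr_sign_concave x k : 0 <= x <= 1 -> (1 <= k)%nat -> rr x k <= 0.
Proof.
  intros Hx Hk. destruct k as [|[|j]]; [lia| |].
  - rewrite rr_1. assert (Rpower 2 x <= Rpower 2 1) by (apply Rle_Rpower; lra).
    rewrite Rpower_1 in H by lra. lra.
  - rewrite rr_SS. pose proof (INR_S_pos j).
    pose proof (pow_second_concave x (INR (S j)) Hx ltac:(lra)). lra.
Qed.

Lemma rr_sign_convex x k : 1 <= x -> (1 <= k)%nat -> 0 <= rr x k.
Proof.
  intros Hx Hk. destruct k as [|[|j]]; [lia| |].
  - rewrite rr_1. assert (Rpower 2 1 <= Rpower 2 x) by (apply Rle_Rpower; lra).
    rewrite Rpower_1 in H by lra. lra.
  - rewrite rr_SS. pose proof (INR_S_pos j).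
    pose proof (pow_second_convex x (INR (S j)) Hx ltac:(lra)). lra.
Qed.

Lemma rr_third_concave x k : 0 <= x <= 1 -> (1 <= k)%nat -> rr x k <= rr x (S k).
Proof.
  intros Hx Hk. destruct k as [|[|j]]; [lia| |].
  - rewrite rr_1, rr_SS. simpl INR. rewrite Rpower_base1.
    replace (1 + 2) with 3 by ring. replace (1 + 1) with 2 by ring.
    pose proof (K1_concave x Hx). lra.
  - rewrite !rr_SS. rewrite (S_INR (S j)). pose proof (INR_S_pos j).
    pose proof (pow_third_concave x (INR (S j)) Hx ltac:(lra)).
    replace (INR (S j) + 1 + 2) with (INR (S j) + 3) by ring.
    replace (INR (S j) + 1 + 1) with (INR (S j) + 2) by ring. lra.
Qed.

Lemma rr_third_convex x k : 1 <= x <= 2 -> (1 <= k)%nat -> rr x (S k) <= rr x k.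
Proof.
  intros Hx Hk. destruct k as [|[|j]]; [lia| |].
  - rewrite rr_1, rr_SS. simpl INR. rewrite Rpower_base1.
    replace (1 + 2) with 3 by ring. replace (1 + 1) with 2 by ring.
    pose proof (K1_convex x Hx). lra.
  - rewrite !rr_SS. rewrite (S_INR (S j)). pose proof (INR_S_pos j).
    pose proof (pow_third_convex x (INR (S j)) Hx ltac:(lra)).
    replace (INR (S j) + 1 + 2) with (INR (S j) + 3) by ring.
    replace (INR (S j) + 1 + 1) with (INR (S j) + 2) by ring. lra.
Qed.

Lemma Dd_mono x y k : 0 <= x -> x <= y -> Dd x k <= Dd y k.
Proof.
  intros Hx Hxy. destruct k as [|j]. simpl; lra.
  unfold Dd. apply Dmono; auto. apply INR_S_pos.
Qed.

Fixpoint sumk (f : nat -> R) (n : nat) : R :=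
  match n with O => 0 | S n' => sumk f n' + f (S n') end.

Lemma abel (w d : nat -> R) n : d O = 0 ->
  (forall k, (1 <= k)%nat -> d k <= 0) ->
  (forall k, (1 <= k)%nat -> w (S k) <= w k) ->
  0 <= sumk (fun k => w k * (d (pred k) - d k)) n + w n * d n.
Proof.
  intros H0 Hd Hw. induction n as [|n IH].
  - simpl. rewrite H0. lra.
  - simpl sumk. simpl pred.
    replace (sumk (fun k => w k * (d (pred k) - d k)) n + w (S n) * (d n - d (S n)) + w (S n) * d (S n))
      with ((sumk (fun k => w k * (d (pred k) - d k)) n + w n * d n) + (w (S n) - w n) * d n) by ring.
    destruct n as [|n].
    + simpl sumk. rewrite H0. lra.
    + assert (w (S (S n)) <= w (S n)) by (apply Hw; lia).
      assert (d (S n) <= 0) by (apply Hd; lia). nra.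
Qed.

Lemma abel' (w d : nat -> R) n : d O = 0 ->
  (forall k, (1 <= k)%nat -> d k <= 0) ->
  (forall k, (1 <= k)%nat -> w (S k) <= w k) -> 0 <= w n ->
  0 <= sumk (fun k => w k * (d (pred k) - d k)) n.
Proof.
  intros. pose proof (abel w d n H H0 H1).
  destruct n. simpl. lra.
  assert (d (S n) <= 0) by (apply H0; lia). nra.
Qed.

Lemma sumk_ext f g n : (forall k, (1 <= k <= n)%nat -> f k = g k) -> sumk f n = sumk g n.
Proof.
  induction n; intros H; simpl. auto.
  rewrite IHn, H. auto. lia. intros; apply H; lia.
Qed.

Lemma sumk_minus f g n : sumk f n - sumk g n = sumk (fun k => f k - g k) n.
Proof. induction n; simpl. ring. rewrite <- IHn. ring. Qed.

Lemma sumk_nonneg f n : (forall k, (1 <= k <= n)%nat -> 0 <= f k) -> 0 <= sumk f n.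
Proof. induction n; intros H; simpl. lra. assert (0 <= f (S n)) by (apply H; lia).
  assert (0 <= sumk f n) by (apply IHn; intros; apply H; lia). lra. Qed.

Lemma sumk_ge_first f n : (1 <= n)%nat -> (forall k, (1 <= k <= n)%nat -> 0 <= f k) -> f 1%nat <= sumk f n.
Proof.
  induction n; intros Hn H. lia. simpl.
  destruct n. simpl. lra.
  assert (0 <= f (S (S n))) by (apply H; lia).
  assert (f 1%nat <= sumk f (S n)) by (apply IHn; [lia| intros; apply H; lia]). lra.
Qed.

Lemma sum_nm_2 (f : nat -> R) n : (1 <= n)%nat -> sum_n_m f 2 n = sumk f n - f 1%nat.
Proof.
  intros Hn. induction n as [|n IH]. lia.
  destruct n as [|n].
  - rewrite sum_n_m_zero by lia. simpl. unfold zero; simpl. ring.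
  - rewrite sum_n_Sm by lia. rewrite IH by lia. simpl sumk. unfold plus; simpl. ring.
Qed.

Definition F1x (N : nat) (x : R) := sumk (fun k => rr x k ^ 2) N.
Definition F2x (N : nat) (x : R) := sumk (fun k => (INR N - INR k + 1) * Rabs (rr x k)) N.

Lemma F1_dec N x y : 0 <= x -> x <= y -> y <= 1 -> F1x N y <= F1x N x.
Proof.
  intros H1 H2 H3. destruct N as [|N]. unfold F1x; simpl; lra.
  cut (0 <= F1x (S N) x - F1x (S N) y). lra.
  unfold F1x. rewrite sumk_minus.
  rewrite (sumk_ext _ (fun k => (- rr x k - rr y k) * ((fun j => Dd x j - Dd y j) (pred k) - (fun j => Dd x j - Dd y j) k))).
  2:{ intros k Hk. unfold rr. ring. }
  apply (abel' (fun k => - rr x k - rr y k) (fun j => Dd x j - Dd y j)).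
  - simpl. ring.
  - intros k Hk. pose proof (Dd_mono x y k H1 H2). lra.
  - intros k Hk. pose proof (rr_third_concave x k ltac:(lra) Hk).
    pose proof (rr_third_concave y k ltac:(lra) Hk). lra.
  - pose proof (rr_sign_concave x (S N) ltac:(lra) ltac:(lia)).
    pose proof (rr_sign_concave y (S N) ltac:(lra) ltac:(lia)). lra.
Qed.

Lemma F1_inc N x y : 1 <= x -> x <= y -> y <= 2 -> F1x N x <= F1x N y.
Proof.
  intros H1 H2 H3. destruct N as [|N]. unfold F1x; simpl; lra.
  cut (0 <= F1x (S N) y - F1x (S N) x). lra.
  unfold F1x. rewrite sumk_minus.
  rewrite (sumk_ext _ (fun k => (rr x k + rr y k) * ((fun j => Dd x j - Dd y j) (pred k) - (fun j => Dd x j - Dd y j) k))).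
  2:{ intros k Hk. unfold rr. ring. }
  apply (abel' (fun k => rr x k + rr y k) (fun j => Dd x j - Dd y j)).
  - simpl. ring.
  - intros k Hk. pose proof (Dd_mono x y k ltac:(lra) H2). lra.
  - intros k Hk. pose proof (rr_third_convex x k ltac:(lra) Hk).
    pose proof (rr_third_convex y k ltac:(lra) Hk). lra.
  - pose proof (rr_sign_convex x (S N) ltac:(lra) ltac:(lia)).
    pose proof (rr_sign_convex y (S N) ltac:(lra) ltac:(lia)). lra.
Qed.

Lemma wN_dec N k : (1 <= k)%nat -> INR N - INR (S k) + 1 <= INR N - INR k + 1.
Proof. intros. rewrite S_INR. lra. Qed.

Lemma F2_dec N x y : 0 <= x -> x <= y -> y <= 1 -> F2x N y <= F2x N x.
Proof.
  intros H1 H2 H3.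
  cut (0 <= F2x N x - F2x N y). lra.
  unfold F2x. rewrite sumk_minus.
  rewrite (sumk_ext _ (fun k => (INR N - INR k + 1) * ((fun j => Dd x j - Dd y j) (pred k) - (fun j => Dd x j - Dd y j) k))).
  2:{ intros k Hk.
      rewrite (Rabs_left1 (rr x k)) by (apply rr_sign_concave; lra || lia).
      rewrite (Rabs_left1 (rr y k)) by (apply rr_sign_concave; lra || lia).
      unfold rr. ring. }
  apply (abel' (fun k => INR N - INR k + 1) (fun j => Dd x j - Dd y j)).
  - simpl. ring.
  - intros k Hk. pose proof (Dd_mono x y k H1 H2). lra.
  - intros k Hk. apply wN_dec; auto.
  - lra.
Qed.

Lemma F2_inc N x y : 1 <= x -> x <= y -> y <= 2 -> F2x N x <= F2x N y.
Proof.
  intros H1 H2 H3.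
  cut (0 <= F2x N y - F2x N x). lra.
  unfold F2x. rewrite sumk_minus.
  rewrite (sumk_ext _ (fun k => (INR N - INR k + 1) * ((fun j => Dd x j - Dd y j) (pred k) - (fun j => Dd x j - Dd y j) k))).
  2:{ intros k Hk.
      rewrite (Rabs_right (rr x k)) by (apply Rle_ge, rr_sign_convex; lra || lia).
      rewrite (Rabs_right (rr y k)) by (apply Rle_ge, rr_sign_convex; lra || lia).
      unfold rr. ring. }
  apply (abel' (fun k => INR N - INR k + 1) (fun j => Dd x j - Dd y j)).
  - simpl. ring.
  - intros k Hk. pose proof (Dd_mono x y k ltac:(lra) H2). lra.
  - intros k Hk. apply wN_dec; auto.
  - lra.
Qed.

Lemma wN_pos N k : (k <= N)%nat -> 0 < INR N - INR k + 1.
Proof. intros H. apply le_INR in H. lra. Qed.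

Lemma F1_ge N x : (1 <= N)%nat -> (rr x 1) ^ 2 <= F1x N x.
Proof.
  intros HN. unfold F1x.
  apply (sumk_ge_first (fun k => rr x k ^ 2)); auto.
  intros; apply pow2_ge_0.
Qed.

Lemma F1_nonneg N x : 0 <= F1x N x.
Proof. unfold F1x. apply sumk_nonneg. intros; apply pow2_ge_0. Qed.

Lemma F2_ge N x : (1 <= N)%nat -> INR N * Rabs (rr x 1) <= F2x N x.
Proof.
  intros HN. unfold F2x.
  pose proof (sumk_ge_first (fun k => (INR N - INR k + 1) * Rabs (rr x k)) N HN) as K.
  cbv beta in K. replace (INR N - INR 1 + 1) with (INR N) in K by (simpl; ring). apply K.
  intros k Hk. apply Rmult_le_pos. left; apply wN_pos; lia. apply Rabs_pos.
Qed.

Lemma F2_nonneg N x : 0 <= F2x N x.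
Proof. unfold F2x. apply sumk_nonneg. intros k Hk. apply Rmult_le_pos.
  left; apply wN_pos; lia. apply Rabs_pos. Qed.

Lemma rho2_rr H k : (2 <= k)%nat -> rho2 H k = rr (2 * H) k.
Proof.
  intros Hk. destruct k as [|[|j]]; try lia.
  rewrite rr_SS. unfold rho2. rewrite (S_INR (S j)).
  replace (INR (S j) + 1 + 1) with (INR (S j) + 2) by ring.
  replace (INR (S j) + 1 - 1) with (INR (S j)) by ring. ring.
Qed.

Lemma FF1_eq N H : (1 <= N)%nat -> FF1 N H = F1x N (2 * H).
Proof.
  intros HN. unfold FF1, F1x.
  rewrite (sum_n_m_ext_loc _ (fun k => rr (2 * H) k ^ 2)).
  2:{ intros k Hk. rewrite rho2_rr by lia. auto. }
  rewrite sum_nm_2 by auto. rewrite rr_1. ring.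
Qed.

Lemma FF2_eq N H : (1 <= N)%nat -> FF2 N H = F2x N (2 * H).
Proof.
  intros HN. unfold FF2, F2x.
  rewrite (sum_n_m_ext_loc _ (fun k => (INR N - INR k + 1) * Rabs (rr (2 * H) k))).
  2:{ intros k Hk. rewrite rho2_rr by lia. auto. }
  rewrite sum_nm_2 by auto. rewrite rr_1. simpl INR. ring.
Qed.

Lemma g_dec H1 H2 : 0 <= H1 -> H1 < H2 -> H2 <= 1/2 ->
  (H2 - 1/2)^2 / (1 - H2) < (H1 - 1/2)^2 / (1 - H1).
Proof.
  intros. cut (0 < (H1 - 1/2)^2 / (1 - H1) - (H2 - 1/2)^2 / (1 - H2)). lra.
  replace ((H1 - 1/2)^2 / (1 - H1) - (H2 - 1/2)^2 / (1 - H2)) with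
    (((H1 - 1/2)^2 * (1 - H2) - (H2 - 1/2)^2 * (1 - H1)) / ((1 - H1) * (1 - H2))) by (field; lra).
  apply Rdiv_lt_0_compat; [|nra].
  replace ((H1 - 1/2)^2 * (1 - H2) - (H2 - 1/2)^2 * (1 - H1)) with
    ((H2 - H1) * ((1 - H1 - H2)/2 + (1/2 - H1) * (1/2 - H2))) by field.
  apply Rmult_lt_0_compat; nra.
Qed.

Lemma g_inc H1 H2 : 1/2 <= H1 -> H1 < H2 -> H2 < 1 ->
  (H1 - 1/2)^2 / (1 - H1) < (H2 - 1/2)^2 / (1 - H2).
Proof.
  intros. cut (0 < (H2 - 1/2)^2 / (1 - H2) - (H1 - 1/2)^2 / (1 - H1)). lra.
  replace ((H2 - 1/2)^2 / (1 - H2) - (H1 - 1/2)^2 / (1 - H1)) with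
    (((H2 - 1/2)^2 * (1 - H1) - (H1 - 1/2)^2 * (1 - H2)) / ((1 - H1) * (1 - H2))) by (field; lra).
  apply Rdiv_lt_0_compat; [|nra].
  set (u1 := H1 - 1/2). set (u2 := H2 - 1/2).
  replace (1 - H1) with (1/2 - u1) by (unfold u1; lra).
  replace (1 - H2) with (1/2 - u2) by (unfold u2; lra).
  assert (0 <= u1) by (unfold u1; lra). assert (u1 < u2) by (unfold u1, u2; lra).
  assert (u2 < 1/2) by (unfold u2; lra).
  replace (u2 ^ 2 * (1 / 2 - u1) - u1 ^ 2 * (1 / 2 - u2)) with
    ((u2 - u1) * ((u2 + u1)/2 - u1 * u2)) by field.
  apply Rmult_lt_0_compat; nra.
Qed.

Lemma g_nonneg H : H < 1 -> 0 <= (H - 1/2)^2 / (1 - H).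
Proof. intros. apply Rdiv_le_0_compat. apply pow2_ge_0. lra. Qed.

Lemma E_left (F : R -> R) :
  (forall H1 H2, 0 <= H1 -> H1 <= H2 -> H2 <= 1/2 -> F H2 <= F H1) ->
  (forall H, 0 <= F H) -> (forall H, 0 <= H < 1/2 -> 0 < F H) ->
  forall H1 H2, 0 <= H1 -> H1 < H2 -> H2 <= 1/2 -> Efun (F H1) H1 < Efun (F H2) H2.
Proof.
  intros Hm Hn Hp H1 H2 A1 A2 A3. unfold Efun.
  pose proof (g_dec H1 H2 A1 A2 A3). pose proof (g_nonneg H2 ltac:(lra)).
  pose proof (Hm H1 H2 A1 ltac:(lra) A3). pose proof (Hn H2). pose proof (Hp H1 ltac:(lra)).
  set (g1 := (H1 - 1/2)^2 / (1 - H1)) in *. set (g2 := (H2 - 1/2)^2 / (1 - H2)) in *.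
  nra.
Qed.

Lemma E_right (F : R -> R) :
  (forall H1 H2, 1/2 <= H1 -> H1 <= H2 -> H2 < 1 -> F H1 <= F H2) ->
  (forall H, 0 <= F H) -> (forall H, 1/2 < H < 1 -> 0 < F H) ->
  forall H1 H2, 1/2 <= H1 -> H1 < H2 -> H2 < 1 -> Efun (F H2) H2 < Efun (F H1) H1.
Proof.
  intros Hm Hn Hp H1 H2 A1 A2 A3. unfold Efun.
  pose proof (g_inc H1 H2 A1 A2 A3). pose proof (g_nonneg H1 ltac:(lra)).
  pose proof (Hm H1 H2 A1 ltac:(lra) A3). pose proof (Hn H1). pose proof (Hp H2 ltac:(lra)).
  set (g1 := (H1 - 1/2)^2 / (1 - H1)) in *. set (g2 := (H2 - 1/2)^2 / (1 - H2)) in *.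
  nra.
Qed.

Lemma E_lim (F : R -> R) c : 0 < c -> (forall H, 3/4 <= H < 1 -> c <= F H) ->
  filterlim (fun H => Efun (F H) H) (at_left 1) (Rbar_locally m_infty).
Proof.
  intros Hc HF P [M HM].
  set (A := Rabs M + 1).
  assert (HA : 0 < A) by (unfold A; pose proof (Rabs_pos M); lra).
  assert (He : 0 < Rmin (1/4) (c / (16 * A))).
  { apply Rmin_pos. lra. apply Rdiv_lt_0_compat; lra. }
  exists (mkposreal _ He). intros y Hy Hy1.
  apply HM.
  unfold ball in Hy; simpl in Hy; unfold AbsRing_ball, abs, minus, plus, opp in Hy; simpl in Hy.
  rewrite Rabs_left1 in Hy by lra.
  assert (Hz1 : 1 - y < 1/4) by (pose proof (Rmin_l (1/4) (c / (16 * A))); lra).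
  assert (Hz2 : 1 - y < c / (16 * A)) by (pose proof (Rmin_r (1/4) (c / (16 * A))); lra).
  assert (HFy : c <= F y) by (apply HF; lra).
  unfold Efun.
  assert (Hy34 : 1/4 < y - 1/2) by lra.
  set (z := 1 - y) in *.
  assert (Hz : 0 < z) by (unfold z; lra).
  assert (Q : 16 * A * z < c).
  { apply (Rmult_lt_compat_l (16 * A)) in Hz2; [|lra].
    replace (16 * A * (c / (16 * A))) with c in Hz2 by (field; lra). lra. }
  assert (Hq : 1/16 <= (y - 1/2)^2).
  { replace (1/16) with ((1/4)^2) by field. apply pow_incr. lra. }
  assert (K : (y - 1/2)^2 * F y >= c / 16) by nra.
  assert (K2 : A < (y - 1/2)^2 * F y / z).
  { apply (Rmult_lt_reg_r z); [lra|]. unfold Rdiv. rewrite Rmult_assoc, Rinv_l by lra. nra. }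
  assert (M >= - A) by (unfold A; pose proof (Rabs_pos M); pose proof (Rle_abs (-M)); rewrite Rabs_Ropp in *; lra).
  replace (- ((y - 1 / 2) ^ 2 / z) * F y) with (- ((y - 1/2)^2 * F y / z)) by (field; lra).
  lra.
Qed.

Lemma sumk_single (f : nat -> R) n : (1 <= n)%nat -> (forall k, (2 <= k)%nat -> f k = 0) ->
  sumk f n = f 1%nat.
Proof.
  intros Hn Hf. induction n as [|n IH]. lia.
  destruct n. simpl. ring.
  change (sumk f (S (S n))) with (sumk f (S n) + f (S (S n))).
  rewrite Hf by lia. rewrite IH by lia. ring.
Qed.

Lemma rr0_k k : (2 <= k)%nat -> rr 0 k = 0.
Proof. intros Hk. destruct k as [|[|j]]; try lia. rewrite rr_SS, !Rpower_exp0. ring. Qed.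

Lemma rr0_1 : rr 0 1 = -1.
Proof. rewrite rr_1, Rpower_exp0. ring. Qed.

Lemma two_pow_lt H : H < 1/2 -> Rpower 2 (2 * H) < 2.
Proof. intros. pose proof (Rpower_lt 2 (2 * H) 1 ltac:(lra) ltac:(lra)). rewrite Rpower_1 in H1 by lra. lra. Qed.
Lemma two_pow_gt H : 1/2 < H -> 2 < Rpower 2 (2 * H).
Proof. intros. pose proof (Rpower_lt 2 1 (2 * H) ltac:(lra) ltac:(lra)). rewrite Rpower_1 in H1 by lra. lra. Qed.

Theorem mainTheorem6 (N : nat) (hN : (2 <= N)%nat) :
  (* E^1 *)
  (forall H1 H2, 0 <= H1 -> H1 < H2 -> H2 <= 1/2 -> Ent1 N H1 < Ent1 N H2) /\
  Ent1 N (1/2) = 0 /\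
  (forall H1 H2, 1/2 <= H1 -> H1 < H2 -> H2 < 1 -> Ent1 N H2 < Ent1 N H1) /\
  Ent1 N 0 = - (1/4) /\
  filterlim (Ent1 N) (at_left 1) (Rbar_locally m_infty) /\
  (* E^2 *)
  (forall H1 H2, 0 <= H1 -> H1 < H2 -> H2 <= 1/2 -> Ent2 N H1 < Ent2 N H2) /\
  Ent2 N (1/2) = 0 /\
  (forall H1 H2, 1/2 <= H1 -> H1 < H2 -> H2 < 1 -> Ent2 N H2 < Ent2 N H1) /\
  Ent2 N 0 = - (INR N / 4) /\
  filterlim (Ent2 N) (at_left 1) (Rbar_locally m_infty).
Proof.
  assert (HN1 : (1 <= N)%nat) by lia.
  assert (HNR : 2 <= INR N) by (apply le_INR in hN; simpl in hN; lra).
  assert (P1n : forall H, 0 <= FF1 N H) by (intros; rewrite FF1_eq by auto; apply F1_nonneg).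
  assert (P2n : forall H, 0 <= FF2 N H) by (intros; rewrite FF2_eq by auto; apply F2_nonneg).
  assert (P1p : forall H, H <> 1/2 -> 0 < FF1 N H).
  { intros H HH. rewrite FF1_eq by auto.
    eapply Rlt_le_trans; [|apply F1_ge; auto]. rewrite rr_1.
    destruct (Rlt_or_le H (1/2)) as [L|L].
    - pose proof (two_pow_lt H L). nra.
    - pose proof (two_pow_gt H ltac:(lra)). nra. }
  assert (P2p : forall H, H <> 1/2 -> 0 < FF2 N H).
  { intros H HH. rewrite FF2_eq by auto.
    eapply Rlt_le_trans; [|apply F2_ge; auto]. rewrite rr_1.
    apply Rmult_lt_0_compat; [lra|]. apply Rabs_pos_lt.
    destruct (Rlt_or_le H (1/2)) as [L|L].
    - pose proof (two_pow_lt H L). lra.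
    - pose proof (two_pow_gt H ltac:(lra)). lra. }
  assert (Ehalf : forall F, Efun F (1/2) = 0).
  { intros F. unfold Efun. replace (1/2 - 1/2) with 0 by lra.
    replace (0 ^ 2) with 0 by (simpl; lra). unfold Rdiv. rewrite Rmult_0_l. lra. }
  repeat split.
  - apply (E_left (fun H => FF1 N H)); auto.
    + intros H1 H2 A1 A2 A3. rewrite !FF1_eq by auto. apply F1_dec; lra.
    + intros H HH. apply P1p. lra.
  - apply Ehalf.
  - apply (E_right (fun H => FF1 N H)); auto.
    + intros H1 H2 A1 A2 A3. rewrite !FF1_eq by auto. apply F1_inc; lra.
    + intros H HH. apply P1p. lra.
  - unfold Ent1. rewrite FF1_eq by auto. unfold F1x.
    rewrite Rmult_0_r. rewrite sumk_single; auto.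
    2:{ intros k Hk. rewrite rr0_k by auto. simpl; ring. }
    rewrite rr0_1. unfold Efun. field.
  - apply (E_lim (fun H => FF1 N H) (FF1 N (3/4))).
    + apply P1p. lra.
    + intros H HH. rewrite !FF1_eq by auto. apply F1_inc; lra.
  - apply (E_left (fun H => FF2 N H)); auto.
    + intros H1 H2 A1 A2 A3. rewrite !FF2_eq by auto. apply F2_dec; lra.
    + intros H HH. apply P2p. lra.
  - apply Ehalf.
  - apply (E_right (fun H => FF2 N H)); auto.
    + intros H1 H2 A1 A2 A3. rewrite !FF2_eq by auto. apply F2_inc; lra.
    + intros H HH. apply P2p. lra.
  - unfold Ent2. rewrite FF2_eq by auto. unfold F2x.
    rewrite Rmult_0_r. rewrite sumk_single; auto.
    2:{ intros k Hk. rewrite rr0_k by auto. rewrite Rabs_R0. ring. }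
    rewrite rr0_1. unfold Efun. rewrite Rabs_left1 by lra. simpl INR. field.
  - apply (E_lim (fun H => FF2 N H) (FF2 N (3/4))).
    + apply P2p. lra.
    + intros H HH. rewrite !FF2_eq by auto. apply F2_inc; lra.
Qed.
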